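(* Let $\mathfrak{g}$, $P$, $QT_{\mathfrak{g}}$ and $\tau_\pm$ be as in the context, and for $\gamma\in SL(2,\mathbb{Z})$ let $A_\gamma$ denote the corresponding automorphism of $QT_{\mathfrak{g}}$ generated by $\tau_\pm$ (with the composition convention of the context). If $\gamma=\begin{pmatrix} b & a\\ p & r\end{pmatrix}\in SL(2,\mathbb{Z})$, then for all $\lambda,\mu\in P$, $$A_\gamma(Y^\lambda X^\mu)=q^{-2(\mu,\mu)ab-4(\mu,\lambda)ap-2(\lambda,\lambda)pr}\,Y^{r\lambda+a\mu}X^{p\lambda+b\mu}.$$
   Context: $\mathbb{C}_q$ denotes the algebraic closure of $\mathbb{C}((q))$. Let $\mathfrak{g}$ be simply laced with invariant bilinear form $(\cdot,\cdot)$, fundamental weights $w_1,\dots,w_r$ and weight lattice $P=\bigoplus_i\mathbb{Z}w_i$; the coweight lattice $P^\vee$ is identified with $P$ via $(\cdot,\cdot)$. $QT_{\mathfrak{g}}$ is the $\mathbb{C}_q$-algebra generated by $X^\mu,Y^\lambda$ ($\mu,\lambda\in P$) with $X^\mu X^{\mu'}=X^{\mu+\mu'}$, $Y^\lambda Y^{\lambda'}=Y^{\lambda+\lambda'}$, $X^0=Y^0=1$, $X^\mu Y^\lambda=q^{-4(\mu,\lambda)}Y^\lambda X^\mu$. Writing $X_i=X^{w_i}$, $Y_i=Y^{w_i}$, the automorphism $\tau_+$ is determined by $\tau_+(X_i)=q^{-2(w_i,w_i)}Y_iX_i$, $\tau_+(Y^\lambda)=Y^\lambda$, and $\tau_-$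 by $\tau_-(X^\mu)=X^\mu$, $\tau_-(Y_i)=q^{2(w_i,w_i)}X_iY_i$. Set $T_+=\begin{pmatrix}1&1\\0&1\end{pmatrix}$, $T_-=\begin{pmatrix}1&0\\1&1\end{pmatrix}$, $A_{T_\pm}=\tau_\pm$, $A_{T_\pm^{-1}}=\tau_\pm^{-1}$; for $\gamma=M_1M_2\cdots M_k$ with each $M_j\in\{T_\pm^{\pm1}\}$, $A_\gamma:=A_{M_k}\circ\cdots\circ A_{M_1}$. *)

(* Defs.v *)
From HB Require Import structures.
From mathcomp Require Import all_boot all_order all_algebra.
Set Implicit Arguments. Unset Strict Implicit. Unset Printing Implicit Defensive.
Import Order.TTheory GRing.Theory Num.Theory.
Local Open Scope ring_scope.

(* A simply laced simple Lie algebra of rank r is encoded by its Cartan matrix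
   C : an indecomposable, symmetric, positive definite generalized Cartan matrix
   with diagonal entries 2 and off-diagonal entries in {0,-1} (ADE type). *)
Definition simply_laced_cartan (r : nat) (C : 'M[int]_r) : Prop :=
  [/\ (0 < r)%N,
      (forall i, C i i = 2) /\
      (forall i j, i != j -> C i j = 0 \/ C i j = -1),
      C^T = C,
      (forall v : 'rV[rat]_r, v != 0 ->
          0 < (v *m map_mx (fun z : int => z%:~R : rat) C *m v^T) 0 0) &
      (forall S : {set 'I_r}, S != set0 -> S != setT ->
          exists i j, [/\ i \in S, j \notin S & C i j != 0])].

(* Weight lattice P = (+)_i Z w_i : coordinates in the basis of fundamental
   weights; w_i is the i-th unit row vector. *)
Definition fw (r : nat) (i : 'I_r) : 'rV[int]_r := delta_mx 0 i.

Definition intmx_rat (m n : nat) (M : 'M[int]_(m, n)) : 'M[rat]_(m, n) :=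
  map_mx (fun z : int => z%:~R : rat) M.

(* Invariant form normalized so that roots have square length 2:
   (w_i, w_j) = (C^{-1})_{ij}. *)
Definition wform (r : nat) (C : 'M[int]_r) (mu la : 'rV[int]_r) : rat :=
  (intmx_rat mu *m invmx (intmx_rat C) *m (intmx_rat la)^T) 0 0.

(* K plays the role of C_q; qpow x stands for q^x, x rational
   (a compatible system of fractional powers of q). *)
Definition qpow_hom (K : fieldType) (qpow : rat -> K) : Prop :=
  qpow 0 = 1 /\ forall x y, qpow (x + y) = qpow x * qpow y.

Definition is_QT (r : nat) (C : 'M[int]_r) (K : fieldType) (qpow : rat -> K)
    (A : algType K) (X Y : 'rV[int]_r -> A) : Prop :=
  [/\ X 0 = 1, Y 0 = 1,
      (forall m m', X m * X m' = X (m + m')),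
      (forall l l', Y l * Y l' = Y (l + l')) &
      (forall m l, X m * Y l = qpow (- 4 * wform C m l) *: (Y l * X m))].

Definition is_alg_aut (K : fieldType) (A : algType K) (f finv : A -> A) : Prop :=
  [/\ cancel f finv /\ cancel finv f,
      (forall x y, f (x + y) = f x + f y),
      (forall x y, f (x * y) = f x * f y),
      f 1 = 1 &
      (forall (k : K) x, f (k *: x) = k *: f x)].

Definition is_tau_plus (r : nat) (C : 'M[int]_r) (K : fieldType) (qpow : rat -> K)
    (A : algType K) (X Y : 'rV[int]_r -> A) (tp : A -> A) : Prop :=
  (forall i, tp (X (fw i)) = qpow (- 2 * wform C (fw i) (fw i)) *: (Y (fw i) * X (fw i)))
  /\ (forall l, tp (Y l) = Y l).

Definition is_tau_minus (r : nat) (C : 'M[int]_r) (K : fieldType) (qpow : rat -> K)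
    (A : algType K) (X Y : 'rV[int]_r -> A) (tm : A -> A) : Prop :=
  (forall m, tm (X m) = X m)
  /\ (forall i, tm (Y (fw i)) = qpow (2 * wform C (fw i) (fw i)) *: (X (fw i) * Y (fw i))).

Inductive gen := Tp | Tm | Tpi | Tmi.

Definition mx2 (a b c d : int) : 'M[int]_2 :=
  \matrix_(i < 2, j < 2)
    if (i : nat) == 0%N then (if (j : nat) == 0%N then a else b)
    else (if (j : nat) == 0%N then c else d).

Definition gen_mx (g : gen) : 'M[int]_2 :=
  match g with
  | Tp => mx2 1 1 0 1
  | Tpi => mx2 1 (-1) 0 1
  | Tm => mx2 1 0 1 1
  | Tmi => mx2 1 0 (-1) 1
  end.

Definition word_mx (w : seq gen) : 'M[int]_2 :=
  foldr (fun g M => gen_mx g *m M) 1%:M w.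

(* A_gamma = A_{M_k} o ... o A_{M_1} *)
Definition word_aut (A : Type) (tp tpi tm tmi : A -> A) (w : seq gen) (x : A) : A :=
  foldl (fun y g => match g with
                    | Tp => tp y | Tpi => tpi y | Tm => tm y | Tmi => tmi y end) x w.

Definition i0 : 'I_2 := @Ordinal 2 0 erefl.
Definition i1 : 'I_2 := @Ordinal 2 1 erefl.

(* Main.v *)
Require Import Defs.
From HB Require Import structures.
From mathcomp Require Import all_boot all_order all_algebra.
From mathcomp Require Import ring lra.
Import Order.TTheory GRing.Theory Num.Theory.
Local Open Scope ring_scope.

Section W.
Variables (r : nat) (C : 'M[int]_r).
Hypothesis HCt : C^T = C.

Lemma intmx_ratD m n (A B : 'M[int]_(m,n)) : intmx_rat (A+B) = intmx_rat A + intmx_rat B.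
Proof. by apply/matrixP => i j; rewrite !mxE intrD. Qed.
Lemma intmx_ratN m n (A : 'M[int]_(m,n)) : intmx_rat (-A) = - intmx_rat A.
Proof. by apply/matrixP => i j; rewrite !mxE intrN. Qed.
Lemma intmx_ratT m n (A : 'M[int]_(m,n)) : (intmx_rat A)^T = intmx_rat A^T.
Proof. by apply/matrixP => i j; rewrite !mxE. Qed.

Lemma wformDr m l l' : wform C m (l + l') = wform C m l + wform C m l'.
Proof.
rewrite /wform intmx_ratD.
have -> : (intmx_rat l + intmx_rat l')^T = (intmx_rat l)^T + (intmx_rat l')^T.
  by apply/matrixP => i j; rewrite !mxE.
by rewrite mulmxDr mxE.
Qed.
Lemma wformNr m l : wform C m (- l) = - wform C m l.
Proof.
rewrite /wform intmx_ratN.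
have -> : (- intmx_rat l)^T = - (intmx_rat l)^T.
  by apply/matrixP => i j; rewrite !mxE.
by rewrite mulmxN mxE.
Qed.
Lemma wformC m l : wform C m l = wform C l m.
Proof.
have H (M : 'M[rat]_1) : M 0 0 = M^T 0 0 by rewrite mxE.
rewrite /wform [LHS]H !trmx_mul trmxK trmx_inv mulmxA (@intmx_ratT _ _ C) HCt.
by [].
Qed.
Lemma wformDl m m' l : wform C (m + m') l = wform C m l + wform C m' l.
Proof. by rewrite wformC wformDr !(wformC l). Qed.
Lemma wformNl m l : wform C (- m) l = - wform C m l.
Proof. by rewrite wformC wformNr (wformC l). Qed.

Variables (K : fieldType) (qpow : rat -> K) (A : algType K) (X Y : 'rV[int]_r -> A).
Hypothesis Hq : qpow_hom qpow.
Hypothesis HQT : is_QT C qpow X Y.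

Lemma q0 : qpow 0 = 1. Proof. by case: Hq. Qed.
Lemma qD x y : qpow (x + y) = qpow x * qpow y. Proof. by case: Hq. Qed.
Lemma X0 : X 0 = 1. Proof. by case: HQT. Qed.
Lemma Y0 : Y 0 = 1. Proof. by case: HQT. Qed.
Lemma XD m m' : X m * X m' = X (m + m'). Proof. by case: HQT. Qed.
Lemma YD m m' : Y m * Y m' = Y (m + m'). Proof. by case: HQT. Qed.
Lemma swapXY m l : X m * Y l = qpow (- 4 * wform C m l) *: (Y l * X m).
Proof. by case: HQT. Qed.
Lemma swapYX l m : Y l * X m = qpow (4 * wform C m l) *: (X m * Y l).
Proof.
rewrite swapXY scalerA -qD.
have -> : 4 * wform C m l + -4 * wform C m l = 0 by ring.
by rewrite q0 scale1r.
Qed.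

Definition Phi m := qpow (- 2 * wform C m m) *: (Y m * X m).
Definition Psi l := qpow (2 * wform C l l) *: (X l * Y l).

Lemma PhiD m m' : Phi m * Phi m' = Phi (m + m').
Proof.
rewrite /Phi -scalerAl -scalerAr scalerA.
have -> : Y m * X m * (Y m' * X m') = Y m * (X m * Y m') * X m' by rewrite !mulrA.
rewrite swapXY -scalerAr -scalerAl scalerA mulrA YD -(mulrA (Y _)) XD -!qD.
congr (qpow _ *: _).
rewrite !wformDl !wformDr (wformC m' m); ring.
Qed.
Lemma PsiD m m' : Psi m * Psi m' = Psi (m + m').
Proof.
rewrite /Psi -scalerAl -scalerAr scalerA.
have -> : X m * Y m * (X m' * Y m') = X m * (Y m * X m') * Y m' by rewrite !mulrA.
rewrite swapYX -scalerAr -scalerAl scalerA mulrA XD -(mulrA (X _)) YD -!qD.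
congr (qpow _ *: _).
rewrite !wformDl !wformDr (wformC m m'); ring.
Qed.
Lemma wform0 m : wform C m 0 = 0.
Proof. have := wformDr m 0 0; rewrite addr0 => h; lra. Qed.
Lemma Phi0 : Phi 0 = 1.
Proof. by rewrite /Phi X0 Y0 mulr1 wform0 mulr0 q0 scale1r. Qed.
Lemma Psi0 : Psi 0 = 1.
Proof. by rewrite /Psi X0 Y0 mulr1 wform0 mulr0 q0 scale1r. Qed.
Lemma closure (f finv : A -> A) (Haut : is_alg_aut f finv) (Z F : 'rV[int]_r -> A)
  (HZ0 : Z 0 = 1) (HZD : forall m m', Z m * Z m' = Z (m + m'))
  (HF0 : F 0 = 1) (HFD : forall m m', F m * F m' = F (m + m'))
  (Hfw : forall i, f (Z (fw i)) = F (fw i)) : forall m, f (Z m) = F m.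
Proof.
case: Haut => _ _ fM f1 _.
have P0 : f (Z 0) = F 0 by rewrite HZ0 HF0 f1.
have PD : forall m m', f (Z m) = F m -> f (Z m') = F m' -> f (Z (m + m')) = F (m + m').
  by move=> m m' h h'; rewrite -HZD fM h h' HFD.
have PN : forall m, f (Z m) = F m -> f (Z (- m)) = F (- m).
  move=> m h.
  have e1 : F m * F (- m) = 1 by rewrite HFD subrr HF0.
  have e2 : f (Z (- m)) * f (Z m) = 1 by rewrite -fM HZD addNr HZ0 f1.
  by rewrite -[LHS]mulr1 -e1 mulrA -h e2 mul1r.
have PMn : forall m n, f (Z m) = F m -> f (Z (m *+ n)) = F (m *+ n).
  move=> m n h; elim: n => [|n IH]; first by rewrite mulr0n.
  by rewrite mulrS PD.
have PMz : forall m k, f (Z m) = F m -> f (Z (m *~ k)) = F (m *~ k).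
  move=> m [n|n] h; first exact: PMn.
  by rewrite NegzE mulrNz; apply: PN; apply: PMn.
move=> m; rewrite (row_sum_delta m).
apply: (big_ind (fun v => f (Z v) = F v)) => //.
move=> j _; rewrite -[m 0 j]intz scaler_int; apply: PMz; exact: Hfw.
Qed.
Variables (tp tpi tm tmi : A -> A).
Hypotheses (Htp_aut : is_alg_aut tp tpi) (Htm_aut : is_alg_aut tm tmi)
    (Htp : is_tau_plus C qpow X Y tp) (Htm : is_tau_minus C qpow X Y tm).

Lemma autZinv (f finv : A -> A) : is_alg_aut f finv -> forall k x, finv (k *: x) = k *: finv x.
Proof.
case=> [[c1 c2]] _ _ _ fZ k x.
by rewrite -{1}[x]c2 -fZ c1.
Qed.
Lemma autZ (f finv : A -> A) : is_alg_aut f finv -> forall k x, f (k *: x) = k *: f x.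
Proof. by case. Qed.

Lemma tp_X m : tp (X m) = Phi m.
Proof.
exact: (@closure _ _ Htp_aut _ _ X0 XD Phi0 PhiD (fun i => Htp.1 i) m).
Qed.
Lemma tm_Y l : tm (Y l) = Psi l.
Proof.
exact: (@closure _ _ Htm_aut _ _ Y0 YD Psi0 PsiD (fun i => Htm.2 i) l).
Qed.

Lemma tp_YX la mu : tp (Y la * X mu) = qpow (-2 * wform C mu mu) *: (Y (la + mu) * X mu).
Proof.
case: Htp_aut => _ _ fM _ _.
by rewrite fM Htp.2 tp_X /Phi -scalerAr mulrA YD.
Qed.
Lemma tpi_YX la mu : tpi (Y la * X mu) = qpow (2 * wform C mu mu) *: (Y (la - mu) * X mu).
Proof.
have e : Y la * X mu = qpow (2 * wform C mu mu) *: tp (Y (la - mu) * X mu).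
  rewrite tp_YX scalerA -qD subrK.
  have -> : 2 * wform C mu mu + -2 * wform C mu mu = 0 by ring.
  by rewrite q0 scale1r.
rewrite e (@autZinv _ _ Htp_aut).
by case: Htp_aut => [[c1 c2]] _ _ _ _; rewrite c1.
Qed.
Lemma tm_YX la mu : tm (Y la * X mu) = qpow (-2 * wform C la la) *: (Y la * X (la + mu)).
Proof.
case: Htm_aut => _ _ fM _ _.
rewrite fM tm_Y Htm.1 /Psi -scalerAl swapXY -scalerAl -(mulrA (Y _)) XD scalerA -qD.
congr (qpow _ *: _); ring.
Qed.
Lemma tmi_YX la mu : tmi (Y la * X mu) = qpow (2 * wform C la la) *: (Y la * X (mu - la)).
Proof.
have e : Y la * X mu = qpow (2 * wform C la la) *: tm (Y la * X (mu - la)).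
  rewrite tm_YX scalerA -qD (addrC la (mu - la)) subrK.
  have -> : 2 * wform C la la + -2 * wform C la la = 0 by ring.
  by rewrite q0 scale1r.
rewrite e (@autZinv _ _ Htm_aut).
by case: Htm_aut => [[c1 c2]] _ _ _ _; rewrite c1.
Qed.

Lemma wordZ w : forall k x, word_aut tp tpi tm tmi w (k *: x) = k *: word_aut tp tpi tm tmi w x.
Proof.
elim: w => [//|g w IH] k x /=.
case: g; rewrite -IH; congr (word_aut _ _ _ _ w _).
- exact: (@autZ _ _ Htp_aut).
- exact: (@autZ _ _ Htm_aut).
- exact: (@autZinv _ _ Htp_aut).
- exact: (@autZinv _ _ Htm_aut).
Qed.
Lemma ord0E : ord0 = i0 :> 'I_2. Proof. exact/val_inj. Qed.
Lemma ord1E : lift ord0 ord0 = i1 :> 'I_2. Proof. exact/val_inj. Qed.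
Lemma mul2_00 (a b c d : int) (M : 'M[int]_2) : (mx2 a b c d *m M) i0 i0 = a * M i0 i0 + b * M i1 i0.
Proof. by rewrite mxE big_ord_recl big_ord1 !mxE /= ord1E ord0E. Qed.
Lemma mul2_01 (a b c d : int) (M : 'M[int]_2) : (mx2 a b c d *m M) i0 i1 = a * M i0 i1 + b * M i1 i1.
Proof. by rewrite mxE big_ord_recl big_ord1 !mxE /= ord1E ord0E. Qed.
Lemma mul2_10 (a b c d : int) (M : 'M[int]_2) : (mx2 a b c d *m M) i1 i0 = c * M i0 i0 + d * M i1 i0.
Proof. by rewrite mxE big_ord_recl big_ord1 !mxE /= ord1E ord0E. Qed.
Lemma mul2_11 (a b c d : int) (M : 'M[int]_2) : (mx2 a b c d *m M) i1 i1 = c * M i0 i1 + d * M i1 i1.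
Proof. by rewrite mxE big_ord_recl big_ord1 !mxE /= ord1E ord0E. Qed.
Definition mul2E := (mul2_00, mul2_01, mul2_10, mul2_11).

Lemma word_mx_cons g w : word_mx (g :: w) = gen_mx g *m word_mx w. Proof. by []. Qed.

Lemma word_det w : let M := word_mx w in M i0 i0 * M i1 i1 - M i0 i1 * M i1 i0 = 1.
Proof.
elim: w => [|g w IH].
  by rewrite /word_mx /= !mxE.
rewrite word_mx_cons; move: IH; set M := word_mx w => IH.
by case: g; rewrite /gen_mx !mul2E -[RHS]IH; ring.
Qed.
Lemma mxz (v : 'rV[int]_r) (k : int) i j : (v *~ k) i j = v i j * k.
Proof.
case: k => n; first by rewrite mulmxnE -mulr_natr natz.
by rewrite NegzE !mulrNz mxE mulmxnE mulrN -mulr_natr natz.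
Qed.

Lemma word_aut_cons g w x : word_aut tp tpi tm tmi (g :: w) x =
  word_aut tp tpi tm tmi w (match g with Tp => tp x | Tpi => tpi x | Tm => tm x | Tmi => tmi x end).
Proof. by []. Qed.

Lemma mainW w : forall la mu,
  word_aut tp tpi tm tmi w (Y la * X mu)
  = qpow (- 2 * wform C mu mu * ((word_mx w) i0 i1 * (word_mx w) i0 i0)%:~R
          - 4 * wform C mu la * ((word_mx w) i0 i1 * (word_mx w) i1 i0)%:~R
          - 2 * wform C la la * ((word_mx w) i1 i0 * (word_mx w) i1 i1)%:~R)
    *: (Y (la *~ (word_mx w) i1 i1 + mu *~ (word_mx w) i0 i1) * X (la *~ (word_mx w) i1 i0 + mu *~ (word_mx w) i0 i0)).
Proof.
elim: w => [|g w IH] la mu.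
  rewrite /word_mx /= !mxE /= !(mul0r, mulr0, mul1r) !mulr1z !mulr0z addr0 add0r oppr0 q0 scale1r.
  by rewrite addr0 add0r.
have hd := word_det w.
rewrite word_mx_cons word_aut_cons; move: IH hd; set M := word_mx w => IH hd.
have hq := congr1 (fun z : int => z%:~R : rat) hd.
rewrite /= !(intrD, intrM, intrN) in hq.
have hx := congr1 (fun t => wform C mu mu * t) hq.
have hz := congr1 (fun t => wform C la la * t) hq.
move: hx hz => /= hx hz.
case: g; rewrite /gen_mx !mul2E;
  [rewrite tp_YX | rewrite tm_YX | rewrite tpi_YX | rewrite tmi_YX];
  rewrite wordZ IH scalerA -qD; congr (qpow _ *: (Y _ * X _));
  try (apply/matrixP => i j; rewrite !(mxE, mxz); ring);
  rewrite !(intrD, intrM, intrN) !(wformDl, wformDr, wformNl, wformNr) ?(wformC la mu); lra.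
Qed.

End W.

Theorem mainTheorem3 (r : nat) (C : 'M[int]_r) (HC : simply_laced_cartan C)
    (K : fieldType) (qpow : rat -> K) (Hq : qpow_hom qpow)
    (A : algType K) (X Y : 'rV[int]_r -> A) (HQT : is_QT C qpow X Y)
    (tp tpi tm tmi : A -> A)
    (Htp_aut : is_alg_aut tp tpi) (Htm_aut : is_alg_aut tm tmi)
    (Htp : is_tau_plus C qpow X Y tp) (Htm : is_tau_minus C qpow X Y tm)
    (w : seq gen) (la mu : 'rV[int]_r) :
  let g := word_mx w in
  let b := g i0 i0 in let a := g i0 i1 in
  let p := g i1 i0 in let rr := g i1 i1 in
  word_aut tp tpi tm tmi w (Y la * X mu)
  = qpow (- 2 * wform C mu mu * (a * b)%:~R
          - 4 * wform C mu la * (a * p)%:~R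
          - 2 * wform C la la * (p * rr)%:~R)
    *: (Y (la *~ rr + mu *~ a) * X (la *~ p + mu *~ b)).
Proof.
case: HC => _ _ HCt _ _.
exact: (@mainW _ _ HCt _ _ _ _ _ Hq HQT _ _ _ _ Htp_aut Htm_aut Htp Htm w la mu).
Qed.
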